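(* Let $\mathfrak{g}$ be a finite-dimensional Lie algebra over a field $K$ of characteristic zero, and let $x\cdot y=[\phi(x),y]$ be an inner CPA-structure on $\mathfrak{g}$, with $\phi$ a Lie algebra endomorphism, and $A=(\mathfrak{g},\cdot)$. Define $I_0=0$ and $I_n=\{x\in\mathfrak{g}\mid x\cdot\mathfrak{g}\subseteq I_{n-1}\}$ for $n\ge1$. Then $\phi(I_n)\subseteq I_n$ for all $n$, and every Lie algebra ideal of $\mathfrak{g}$ is an ideal of the algebra $A$. Conversely, if the structure is nondegenerate, every ideal of the algebra $A$ is a Lie algebra ideal.
   Context: A CPA-structure on $\mathfrak{g}$ is a bilinear product $x\cdot y$ satisfying, for all $x,y,z$: $x\cdot y=y\cdot x$; $[x,y]\cdot z=x\cdot(y\cdot z)-y\cdot(x\cdot z)$; $x\cdot[y,z]=[x\cdot y,z]+[y,x\cdot z]$. It is inner if $x\cdot y=[\phi(x),y]$ with $\phi$ a Lie algebra homomorphism $\mathfrak{g}\to\mathfrak{g}$. It is nondegenerate if $\{x\mid x\cdot y=0\ \forall y\}=0$. A subspace $J$ is an ideal of $A$ if $\mathfrak{g}\cdot J\subseteq J$. *)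

(* Defs.v *)
From HB Require Import structures.
From mathcomp Require Import all_boot all_order all_algebra.
Set Implicit Arguments. Unset Strict Implicit. Unset Printing Implicit Defensive.
Import GRing.Theory.
Local Open Scope ring_scope.

Definition is_lie_bracket (K : fieldType) (V : vectType K) (br : V -> V -> V) : Prop :=
  [/\ (forall (a : K) (x y z : V), br (a *: x + y) z = a *: br x z + br y z),
      (forall (a : K) (x y z : V), br z (a *: x + y) = a *: br z x + br z y),
      (forall x : V, br x x = 0) &
      (forall x y z : V, br x (br y z) + br y (br z x) + br z (br x y) = 0)].

Definition is_lie_endo (K : fieldType) (V : vectType K) (br : V -> V -> V)
  (phi : V -> V) : Prop :=
  (forall (a : K) (x y : V), phi (a *: x + y) = a *: phi x + phi y) /\
  (forall x y : V, phi (br x y) = br (phi x) (phi y)).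

Definition is_CPA (K : fieldType) (V : vectType K) (br prod : V -> V -> V) : Prop :=
  [/\ (forall x y : V, prod x y = prod y x),
      (forall x y z : V, prod (br x y) z = prod x (prod y z) - prod y (prod x z)) &
      (forall x y z : V, prod x (br y z) = br (prod x y) z + br y (prod x z))].

Definition cpa_nondegenerate (K : fieldType) (V : vectType K) (prod : V -> V -> V) : Prop :=
  forall x : V, (forall y : V, prod x y = 0) -> x = 0.

Definition lie_ideal (K : fieldType) (V : vectType K) (br : V -> V -> V)
  (J : {vspace V}) : Prop :=
  forall x y : V, y \in J -> br x y \in J.

Definition alg_ideal (K : fieldType) (V : vectType K) (prod : V -> V -> V)
  (J : {vspace V}) : Prop :=
  forall x y : V, y \in J -> prod x y \in J.

Fixpoint Iseq (K : fieldType) (V : vectType K) (prod : V -> V -> V) (n : nat)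
  : V -> Prop :=
  match n with
  | O => fun x => x = 0
  | S m => fun x => forall y : V, Iseq prod m (prod x y)
  end.

(* Main.v *)
Require Import Defs.
From HB Require Import structures.
From mathcomp Require Import all_boot all_order all_algebra.
Import GRing.Theory.
Local Open Scope ring_scope.

Definition lin_wrap (K : fieldType) (V : vectType K) (f : V -> V)
  (_ : forall (a : K) (x y : V), f (a *: x + y) = a *: f x + f y) := f.

Lemma lin_wrap_lin (K : fieldType) (V : vectType K) (f : V -> V)
  (H : forall (a : K) (x y : V), f (a *: x + y) = a *: f x + f y) :
  linear (@lin_wrap K V f H).
Proof. by move=> a x y; rewrite /lin_wrap H. Qed.

HB.instance Definition _ (K : fieldType) (V : vectType K) f H :=
  GRing.isLinear.Build K V V *:%R (@lin_wrap K V f H) (@lin_wrap_lin K V f H).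

Lemma inj_surj (K : fieldType) (V : vectType K) (f : V -> V)
  (H : forall (a : K) (x y : V), f (a *: x + y) = a *: f x + f y) :
  injective f -> forall x, exists y, x = f y.
Proof.
move=> inj x.
pose g : 'End(V) := linfun (@lin_wrap K V f H).
have gE : forall v, g v = f v by move=> v; rewrite /g lfunE.
have k0 : lker g == 0%VS by apply/lker0P => u v; rewrite !gE; apply: inj.
have im : limg g = fullv.
  apply/eqP; rewrite eqEdim subvf /=.
  by rewrite limg_dim_eq ?(eqP k0) ?capv0.
exists ((g^-1)%VF x); rewrite -gE limg_lfunVK // im memvf.
by [].
Qed.

Theorem lemma2p11 (K : fieldType) (V : vectType K) (br : V -> V -> V)
  (phi : V -> V) :
  [pchar K] =i pred0 ->
  is_lie_bracket br ->
  is_lie_endo br phi ->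
  is_CPA br (fun x y => br (phi x) y) ->
  (forall (n : nat) (x : V),
      Iseq (fun x y => br (phi x) y) n x -> Iseq (fun x y => br (phi x) y) n (phi x)) /\
  (forall J : {vspace V}, lie_ideal br J -> alg_ideal (fun x y => br (phi x) y) J) /\
  (cpa_nondegenerate (fun x y => br (phi x) y) ->
     forall J : {vspace V}, alg_ideal (fun x y => br (phi x) y) J -> lie_ideal br J).
Proof.
move=> _ [brl brr bra _] [phil phim] [comm _ _].
have phiD : forall x y, phi (x + y) = phi x + phi y.
  by move=> x y; rewrite -[x in LHS]scale1r phil scale1r.
have phi0 : phi 0 = 0.
  by apply: (@addrI _ (phi 0)); rewrite -phiD !addr0.
have phiN : forall x, phi (- x) = - phi x.
  by move=> x; rewrite -[-x]addr0 -scaleN1r phil phi0 addr0 scaleN1r.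
have brD : forall x y z, br (x + y) z = br x z + br y z.
  by move=> x y z; rewrite -[x in LHS]scale1r brl scale1r.
have brDr : forall x y z, br z (x + y) = br z x + br z y.
  by move=> x y z; rewrite -[x in LHS]scale1r brr scale1r.
have br0 : forall z, br 0 z = 0.
  by move=> z; apply: (@addrI _ (br 0 z)); rewrite -brD !addr0.
have brN : forall x z, br (- x) z = - br x z.
  by move=> x z; rewrite -[-x]addr0 -scaleN1r brl br0 addr0 scaleN1r.
have anti : forall a b, br a b = - br b a.
  move=> a b; apply/eqP; rewrite -subr_eq0 opprK.
  have := bra (a + b); rewrite brD !brDr !bra add0r addr0 => ->.
  by [].
have IN : forall n x, Iseq (fun x y => br (phi x) y) n x ->
                      Iseq (fun x y => br (phi x) y) n (- x).
  elim=> [|n IH] x /=; first by move=> ->; rewrite oppr0.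
  by move=> H y; rewrite phiN brN; apply: IH.
split; last split.
- case=> [|n] x /=; first by move=> ->.
  move=> H y; rewrite comm anti; apply: IN; exact: H.
- by move=> J HJ x y yJ; apply: HJ.
move=> nd J HJ x y yJ.
have inj : injective phi.
  move=> u v e; apply/eqP; rewrite -subr_eq0; apply/eqP; apply: nd => z.
  by rewrite phiD phiN e subrr br0.
have [x' ->] := @inj_surj K V phi phil inj x.
exact: HJ.
Qed.
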